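(* Let $\delta>0$, $m>64\pi^2$, $\kappa>0$, $\mu^\star>0$, and let $\varepsilon\in(0,1)$, $\ell>0$, $\gamma>0$ satisfy: $\ell\ge\delta$; $-2^5\xi^2+(\mu^\star\varepsilon+6\ell)\xi-(\gamma+1)\ell\le0$ for all $\xi\in\mathbb{R}$; $2\gamma^2-3\ell\ge0$; $e^\varepsilon<\frac{1+2\kappa}{1+\kappa}$; $e^{(\gamma+1)\varepsilon}(1+3\varepsilon^3)<\frac{m}{64\pi^2}$; and $e^{(\ell-\delta)t}(1+(\varepsilon-\ell t)^3)\ge1+\varepsilon^3$ for all $t\in(0,\varepsilon/\ell)$. Put $\tau(t)=\varepsilon-\ell t$, $a(t)=2^5e^{(\gamma+1)\tau}$, $b(t)=8e^{\tau}$ and $$\underline U(s,t):=\frac{a(s^{3/2}+3\tau^3s)}{(s^{1/2}+\tau^3)^3},\qquad \underline W(s,t):=\frac{bs}{s^{1/2}+\tau^3},\qquad(s,t)\in[0,1]\times[0,\varepsilon/\ell).$$ Then for each $t\in[0,\varepsilon/\ell)$ the map $s\mapsto\underline U(s,t)$ on $[0,1]$ is nonnegative, increasing and concave; $\underline U(0,t)=0$ for all $t\in[0,\varepsilon/\ell)$; $\underline U(s,t)\to2^5$ as $t\uparrow\varepsilon/\ell$ for every $s\in(0,1]$; $$\sup_{t\in(0,\varepsilon/\ell)}\underline U(1,t)<\frac{m}{2\pi^2};$$ and $\mathcal P^{\mu^\star}(\underline U,\underline W)\le0$ for all $(s,t)\in(0,1)\times(0,\varepsilon/\ell)$.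
   Context: For functions $\phi,\psi$ and the constant $\mu^\star>0$, the operator is $\mathcal P^{\mu^\star}(\phi,\psi):=\phi_t-16s^{3/2}\phi_{ss}-4\phi_s\big(\psi-\frac{\mu^\star s}{4}\big)$. *)

(* Defs.v *)
From Stdlib Require Import Reals Lra.
From Coquelicot Require Import Coquelicot.
Open Scope R_scope.

Definition s12 (s : R) : R := sqrt s.
Definition s32 (s : R) : R := (sqrt s) ^ 3.

Definition tau (eps l t : R) : R := eps - l * t.
Definition acoef (eps l gamma t : R) : R := 2 ^ 5 * exp ((gamma + 1) * tau eps l t).
Definition bcoef (eps l t : R) : R := 8 * exp (tau eps l t).

Definition Ulow (eps l gamma : R) (s t : R) : R :=
  acoef eps l gamma t * (s32 s + 3 * (tau eps l t) ^ 3 * s)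
    / (s12 s + (tau eps l t) ^ 3) ^ 3.

Definition Wlow (eps l : R) (s t : R) : R :=
  bcoef eps l t * s / (s12 s + (tau eps l t) ^ 3).

Definition Pop (mu : R) (phi psi : R -> R -> R) (s t : R) : R :=
  Derive (fun t' => phi s t') t
  - 16 * s32 s * Derive (fun s' => Derive (fun s'' => phi s'' t) s') s
  - 4 * Derive (fun s' => phi s' t) s * (psi s t - mu * s / 4).

Definition concave_on (a b : R) (f : R -> R) : Prop :=
  forall x y lam, a <= x <= b -> a <= y <= b -> 0 <= lam <= 1 ->
    lam * f x + (1 - lam) * f y <= f (lam * x + (1 - lam) * y).

(* Main.v *)
Require Import Defs.
From Stdlib Require Import Reals Lra.
From Coquelicot Require Import Coquelicot.
Open Scope R_scope.
Ltac sqrt_elim s :=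
  let Hx0 := fresh in let Hxx := fresh in let x := fresh "x" in
  assert (Hx0 : 0 < sqrt s) by (apply sqrt_lt_R0; lra);
  assert (Hxx : sqrt s * sqrt s = s) by (apply sqrt_sqrt; lra);
  set (x := sqrt s) in *; clearbody x; try rewrite <- Hxx.
Lemma dUs (a c s : R) : 0 < c -> 0 < s ->
  is_derive (fun s => a * (sqrt s ^ 3 + 3 * c * s) / (sqrt s + c) ^ 3) s
    (3 * a * c ^ 2 / (sqrt s + c) ^ 4).
Proof.
intros Hc Hs.
auto_derive.
- assert (0 < sqrt s) by (apply sqrt_lt_R0; lra).
  repeat split; try lra; repeat apply Rmult_integral_contrapositive_currified; lra.
- sqrt_elim s. field. lra.
Qed.
Lemma dUss (a c s : R) : 0 < c -> 0 < s ->
  is_derive (fun s => 3 * a * c ^ 2 / (sqrt s + c) ^ 4) s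
    (- 6 * a * c ^ 2 / (sqrt s * (sqrt s + c) ^ 5)).
Proof.
intros Hc Hs.
auto_derive.
- assert (0 < sqrt s) by (apply sqrt_lt_R0; lra).
  repeat split; try lra; repeat apply Rmult_integral_contrapositive_currified; lra.
- sqrt_elim s. field. lra.
Qed.
Lemma Qneg (mu eps l gamma x tau E : R) :
  0 < tau <= eps -> 0 < x -> 0 < l -> 0 < gamma -> 0 < mu -> 1 + tau <= E ->
  (forall xi : R, - 2 ^ 5 * xi ^ 2 + (mu * eps + 6 * l) * xi - (gamma + 1) * l <= 0) ->
  - (gamma + 1) * l * (x + 3 * tau^3) * (x + tau^3)^2 + 18 * l * tau^2 * tau^3 * (x + tau^3)
  + 96 * (tau^3)^2 - 96 * E * (tau^3)^2 + 3 * mu * (tau^3)^2 * (x + tau^3) <= 0.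
Proof.
intros Ht Hx Hl Hg Hmu HE H2.
set (y := x + tau^3).
assert (Hy : 0 < y) by (unfold y; pose proof (pow_lt tau 3); lra).
specialize (H2 (tau^2 / y)).
assert (A : 0 <= 3 * tau^3 * y^2) by (pose proof (pow_lt tau 3); pose proof (pow_lt y 2); nra).
assert (B := Rmult_le_compat_l _ _ _ A H2).
replace (3 * tau ^ 3 * y ^ 2 * (- 2 ^ 5 * (tau ^ 2 / y) ^ 2 + (mu * eps + 6 * l) * (tau ^ 2 / y) - (gamma + 1) * l))
  with (-96 * tau^7 + 3 * (mu * eps + 6 * l) * tau^5 * y - 3 * (gamma + 1) * l * tau^3 * y^2) in B
  by (field; lra).
assert (C : 96 * (tau^3)^2 - 96 * E * (tau^3)^2 <= - 96 * tau^7).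
{ assert (0 < tau^6) by (apply pow_lt; lra). nra. }
assert (D : mu * tau^6 * y <= mu * eps * tau^5 * y).
{ assert (0 < tau^5) by (apply pow_lt; lra). assert (0 <= mu * tau^5 * y) by (apply Rmult_le_pos; nra).
  nra. }
assert (F : 0 < (gamma + 1) * l * y^2 * x).
{ assert (0 < y^2) by (apply pow_lt; lra). apply Rmult_lt_0_compat; try lra. apply Rmult_lt_0_compat; nra. }
replace (x + 3 * tau^3) with (y + 2 * tau^3) by (unfold y; ring).
replace x with (y - tau^3) in F by (unfold y; ring).
clearbody y.
lra.
Qed.
Lemma dUt (eps l gamma s t : R) : 0 < s -> 0 < eps - l * t ->
  is_derive (fun t => 2 ^ 5 * exp ((gamma + 1) * (eps - l * t)) *
        (sqrt s ^ 3 + 3 * (eps - l * t) ^ 3 * s) / (sqrt s + (eps - l * t) ^ 3) ^ 3) t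
   (- (gamma + 1) * l * (2 ^ 5 * exp ((gamma + 1) * (eps - l * t))) *
       (sqrt s ^ 3 + 3 * (eps - l * t) ^ 3 * s) / (sqrt s + (eps - l * t) ^ 3) ^ 3
    + 18 * l * (2 ^ 5 * exp ((gamma + 1) * (eps - l * t))) * (eps - l * t) ^ 2 * (eps - l * t) ^ 3
       * s / (sqrt s + (eps - l * t) ^ 3) ^ 4).
Proof.
intros Hs Ht.
assert (0 < sqrt s) by (apply sqrt_lt_R0; lra).
assert (0 < (eps - l * t)^3) by (apply pow_lt; lra).
auto_derive.
- repeat apply Rmult_integral_contrapositive_currified; simpl in *; lra.
- replace (eps + - (l*t)) with (eps - l*t) by ring.
  set (E := exp ((gamma + 1) * (eps - l * t))). clearbody E.
  set (tau := eps - l * t) in *. clearbody tau.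
  sqrt_elim s. field. simpl in *; lra.
Qed.
Lemma Pneg (mu eps l gamma s t : R) :
  0 < eps -> 0 < l -> 0 < gamma -> 0 < mu ->
  (forall xi : R, - 2 ^ 5 * xi ^ 2 + (mu * eps + 6 * l) * xi - (gamma + 1) * l <= 0) ->
  0 < s < 1 -> 0 < t < eps / l ->
  Pop mu (Ulow eps l gamma) (Wlow eps l) s t <= 0.
Proof.
intros He Hl Hg Hmu H2 Hs Ht.
assert (Hlt : l * t < eps).
{ assert (l * t < l * (eps/l)) by (apply Rmult_lt_compat_l; lra).
  replace (l*(eps/l)) with eps in H by (field; lra). lra. }
assert (Htau : 0 < eps - l * t) by lra.
assert (Htau2 : eps - l * t <= eps) by nra.
assert (Hc : 0 < (eps - l * t)^3) by (apply pow_lt; lra).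
assert (Dt : Derive (fun t' => Ulow eps l gamma s t') t =
   (- (gamma + 1) * l * (2 ^ 5 * exp ((gamma + 1) * (eps - l * t))) *
       (sqrt s ^ 3 + 3 * (eps - l * t) ^ 3 * s) / (sqrt s + (eps - l * t) ^ 3) ^ 3
    + 18 * l * (2 ^ 5 * exp ((gamma + 1) * (eps - l * t))) * (eps - l * t) ^ 2 * (eps - l * t) ^ 3
       * s / (sqrt s + (eps - l * t) ^ 3) ^ 4)).
{ apply is_derive_unique. unfold Ulow, acoef, tau, s32, s12. apply dUt; lra. }
set (a := acoef eps l gamma t).
set (c := tau eps l t ^ 3).
assert (Ds : forall s', 0 < s' -> Derive (fun s'' => Ulow eps l gamma s'' t) s' =
    3 * a * c ^ 2 / (sqrt s' + c) ^ 4).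
{ intros s' Hs'. apply is_derive_unique. unfold Ulow, s32, s12. apply dUs; auto. }
assert (Dss : Derive (fun s' => Derive (fun s'' => Ulow eps l gamma s'' t) s') s =
   - 6 * a * c ^ 2 / (sqrt s * (sqrt s + c) ^ 5)).
{ rewrite (Derive_ext_loc _ (fun s' => 3 * a * c ^ 2 / (sqrt s' + c) ^ 4)).
  - apply is_derive_unique. apply dUss; auto; lra.
  - apply (locally_interval _ s 0 p_infty); simpl; try lra; auto.
    }
unfold Pop. rewrite Dt, Dss, Ds by lra.
unfold Wlow, bcoef, s32, s12.
unfold c, a, acoef, tau in *.
pose proof (exp_ineq1_le (eps - l * t)) as HE.
pose proof (Qneg mu eps l gamma (sqrt s) (eps - l * t) (exp (eps - l * t))) as Q.
assert (0 < exp ((gamma + 1) * (eps - l * t))) by apply exp_pos.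
set (E1 := exp ((gamma + 1) * (eps - l * t))) in *. clearbody E1.
set (E := exp (eps - l * t)) in *. clearbody E.
set (tau := eps - l * t) in *. clearbody tau.
sqrt_elim s.
specialize (Q (conj Htau Htau2) ltac:(assumption) Hl Hg Hmu HE H2).
set (Qv := - (gamma + 1) * l * (x + 3 * tau^3) * (x + tau^3)^2 + 18 * l * tau^2 * tau^3 * (x + tau^3)
  + 96 * (tau^3)^2 - 96 * E * (tau^3)^2 + 3 * mu * (tau^3)^2 * (x + tau^3)) in Q.
assert (Hxc : 0 < x + tau^3) by lra.
match goal with |- ?L <= 0 => replace L with (2^5 * E1 * x^2 / (x + tau^3)^5 * Qv) end.
- assert (0 <= 2^5 * E1 * x^2 / (x + tau^3)^5).
  { apply Rmult_le_pos. assert (0 < x^2) by (apply pow_lt; lra). nra.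
    apply Rlt_le, Rinv_0_lt_compat, pow_lt; lra. }
  nra.
- unfold Qv. field. lra.
Qed.
Lemma concave_core (f df : R -> R) x y lam :
  (forall u, 0 < u -> u <= 1 -> is_derive f u (df u)) ->
  (forall u, 0 <= u <= 1 -> continuity_pt f u) ->
  (forall u v, 0 <= u -> u <= v -> v <= 1 -> df v <= df u) ->
  0 <= x -> x < y -> y <= 1 -> 0 < lam < 1 ->
  lam * f x + (1 - lam) * f y <= f (lam * x + (1 - lam) * y).
Proof.
intros Hd Hc Hm Hx Hxy Hy Hl.
set (z := lam * x + (1 - lam) * y).
assert (Hz1 : x < z) by (unfold z; nra).
assert (Hz2 : z < y) by (unfold z; nra).
destruct (MVT_gen f x z df) as [c1 [Hc1 E1]].
{ rewrite Rmin_left, Rmax_right by lra. intros u Hu. apply Hd; lra. }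
{ rewrite Rmin_left, Rmax_right by lra. intros u Hu. apply Hc; lra. }
rewrite Rmin_left, Rmax_right in Hc1 by lra.
destruct (MVT_gen f z y df) as [c2 [Hc2 E2]].
{ rewrite Rmin_left, Rmax_right by lra. intros u Hu. apply Hd; lra. }
{ rewrite Rmin_left, Rmax_right by lra. intros u Hu. apply Hc; lra. }
rewrite Rmin_left, Rmax_right in Hc2 by lra.
assert (Hmm : df c2 <= df c1) by (apply Hm; lra).
assert (P : 0 <= lam * (1 - lam) * (y - x) * (df c1 - df c2)).
{ apply Rmult_le_pos; try lra. apply Rmult_le_pos; try lra. apply Rmult_le_pos; lra. }
assert (Ez1 : z - x = (1 - lam) * (y - x)) by (unfold z; ring).
assert (Ez2 : y - z = lam * (y - x)) by (unfold z; ring).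
rewrite Ez1 in E1. rewrite Ez2 in E2.
clearbody z.
nra.
Qed.

Lemma concave_MVT (f df : R -> R) :
  (forall u, 0 < u -> u <= 1 -> is_derive f u (df u)) ->
  (forall u, 0 <= u <= 1 -> continuity_pt f u) ->
  (forall u v, 0 <= u -> u <= v -> v <= 1 -> df v <= df u) ->
  concave_on 0 1 f.
Proof.
intros Hd Hc Hm x y lam Hx Hy Hl.
destruct (Req_dec lam 0) as [->|H0].
{ replace (0 * x + (1 - 0) * y) with y by ring. lra. }
destruct (Req_dec lam 1) as [->|H1].
{ replace (1 * x + (1 - 1) * y) with x by ring. lra. }
destruct (Rtotal_order x y) as [Hxy|[Hxy|Hxy]].
- apply (concave_core f df); auto; lra.
- subst y. replace (lam * x + (1 - lam) * x) with x by ring. lra.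
- pose proof (concave_core f df y x (1 - lam) Hd Hc Hm ltac:(lra) Hxy ltac:(lra) ltac:(lra)).
  replace (lam * x + (1 - lam) * y) with ((1 - lam) * y + (1 - (1 - lam)) * x) by ring.
  lra.
Qed.

Lemma incr_MVT (f df : R -> R) s1 s2 :
  (forall u, 0 < u -> u <= 1 -> is_derive f u (df u)) ->
  (forall u, 0 <= u <= 1 -> continuity_pt f u) ->
  (forall u, 0 <= u <= 1 -> 0 < df u) ->
  0 <= s1 -> s1 < s2 -> s2 <= 1 -> f s1 < f s2.
Proof.
intros Hd Hc Hp H1 H2 H3.
destruct (MVT_gen f s1 s2 df) as [c1 [Hc1 E1]].
{ rewrite Rmin_left, Rmax_right by lra. intros u Hu. apply Hd; lra. }
{ rewrite Rmin_left, Rmax_right by lra. intros u Hu. apply Hc; lra. }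
rewrite Rmin_left, Rmax_right in Hc1 by lra.
assert (0 < df c1) by (apply Hp; lra).
nra.
Qed.
Lemma cm (f g : R -> R) x : continuous f x -> continuous g x -> continuous (fun y => f y * g y) x.
Proof. apply (continuous_mult (K := R_AbsRing)). Qed.
Lemma cp (f g : R -> R) x : continuous f x -> continuous g x -> continuous (fun y => f y + g y) x.
Proof. apply (continuous_plus (V := R_NormedModule)). Qed.
Lemma cpow (f : R -> R) n x : continuous f x -> continuous (fun y => f y ^ n) x.
Proof. intros H. induction n; simpl. apply continuous_const. apply (cm f (fun y => f y ^ n)); auto. Qed.
Lemma contU (a c s : R) : 0 < c -> 
  continuity_pt (fun s => a * (sqrt s ^ 3 + 3 * c * s) / (sqrt s + c) ^ 3) s.
Proof.
intros Hc. apply continuity_pt_filterlim.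
assert (Hq : 0 <= sqrt s) by apply sqrt_pos.
unfold Rdiv.
apply (cm (fun s => a * (sqrt s ^ 3 + 3 * c * s)) (fun s => / (sqrt s + c) ^ 3)).
- apply (cm (fun _ => a)). apply continuous_const.
  apply (cp (fun s => sqrt s ^ 3)). apply (cpow sqrt). apply continuous_sqrt.
  apply (cm (fun _ => 3 * c)). apply continuous_const. apply continuous_id.
- apply (continuous_Rinv_comp (fun s => (sqrt s + c) ^ 3)).
  apply (cpow (fun s => sqrt s + c)). apply (cp sqrt). apply continuous_sqrt. apply continuous_const.
  apply pow_nonzero. lra.
Qed.
Lemma tau_pos eps l t : 0 < l -> 0 <= t < eps / l -> 0 < eps - l * t <= eps.
Proof.
intros Hl Ht.
assert (l * t < l * (eps/l)) by (apply Rmult_lt_compat_l; lra).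
replace (l*(eps/l)) with eps in H by (field; lra). nra.
Qed.

Lemma dfpos a c u : 0 < a -> 0 < c -> 0 < 3 * a * c ^ 2 / (sqrt u + c) ^ 4.
Proof.
intros. assert (0 <= sqrt u) by apply sqrt_pos.
apply Rdiv_lt_0_compat. assert (0 < c^2) by (apply pow_lt; lra). nra. apply pow_lt; lra.
Qed.

Lemma dfdec a c u v : 0 < a -> 0 < c -> 0 <= u -> u <= v ->
  3 * a * c ^ 2 / (sqrt v + c) ^ 4 <= 3 * a * c ^ 2 / (sqrt u + c) ^ 4.
Proof.
intros. assert (0 <= sqrt u) by apply sqrt_pos.
assert (sqrt u <= sqrt v) by (apply sqrt_le_1_alt; lra).
assert (0 < 3 * a * c^2) by (assert (0 < c^2) by (apply pow_lt; lra); nra).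
unfold Rdiv. apply Rmult_le_compat_l; try lra.
apply Rinv_le_contravar. apply pow_lt; lra. apply pow_incr; lra.
Qed.

Theorem lemma3p7 (delta m kappa mu eps l gamma : R)
  (Hdelta : 0 < delta) (Hm : m > 64 * PI ^ 2) (Hkappa : 0 < kappa) (Hmu : 0 < mu)
  (Heps : 0 < eps < 1) (Hl : 0 < l) (Hgamma : 0 < gamma)
  (H1 : l >= delta)
  (H2 : forall xi : R, - 2 ^ 5 * xi ^ 2 + (mu * eps + 6 * l) * xi - (gamma + 1) * l <= 0)
  (H3 : 2 * gamma ^ 2 - 3 * l >= 0)
  (H4 : exp eps < (1 + 2 * kappa) / (1 + kappa))
  (H5 : exp ((gamma + 1) * eps) * (1 + 3 * eps ^ 3) < m / (64 * PI ^ 2))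
  (H6 : forall t : R, 0 < t < eps / l ->
        exp ((l - delta) * t) * (1 + (eps - l * t) ^ 3) >= 1 + eps ^ 3) :
  (forall t : R, 0 <= t < eps / l ->
     (forall s : R, 0 <= s <= 1 -> 0 <= Ulow eps l gamma s t)
     /\ (forall s1 s2 : R, 0 <= s1 -> s1 < s2 -> s2 <= 1 ->
           Ulow eps l gamma s1 t < Ulow eps l gamma s2 t)
     /\ concave_on 0 1 (fun s => Ulow eps l gamma s t))
  /\ (forall t : R, 0 <= t < eps / l -> Ulow eps l gamma 0 t = 0)
  /\ (forall s : R, 0 < s <= 1 ->
        filterlim (fun t => Ulow eps l gamma s t) (at_left (eps / l)) (locally (2 ^ 5)))
  /\ Rbar_lt
       (Lub_Rbar (fun x => exists t, 0 < t < eps / l /\ x = Ulow eps l gamma 1 t))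
       (Finite (m / (2 * PI ^ 2)))
  /\ (forall s t : R, 0 < s < 1 -> 0 < t < eps / l ->
        Pop mu (Ulow eps l gamma) (Wlow eps l) s t <= 0).
Proof.
split; [|split; [|split; [|split]]].
- intros t Ht.
  destruct (tau_pos eps l t Hl Ht) as [Htau _].
  assert (Hc : 0 < tau eps l t ^ 3) by (apply pow_lt; unfold tau; lra).
  assert (Ha : 0 < acoef eps l gamma t) by (unfold acoef; pose proof (exp_pos ((gamma + 1) * tau eps l t)); lra).
  assert (Hd : forall u, 0 < u -> u <= 1 -> is_derive (fun s => Ulow eps l gamma s t) u
            ((fun u => 3 * acoef eps l gamma t * (tau eps l t ^ 3) ^ 2 / (sqrt u + tau eps l t ^ 3) ^ 4) u)).
  { intros u Hu _. unfold Ulow, s32, s12. apply dUs; auto. }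
  assert (Hcont : forall u, 0 <= u <= 1 -> continuity_pt (fun s => Ulow eps l gamma s t) u).
  { intros u _. unfold Ulow, s32, s12. apply contU; auto. }
  split; [|split].
  + intros s Hs. unfold Ulow, s32, s12.
    assert (0 <= sqrt s) by apply sqrt_pos.
    apply Rmult_le_pos. apply Rmult_le_pos. lra.
    assert (0 <= sqrt s ^ 3) by (apply pow_le; lra). nra.
    apply Rlt_le, Rinv_0_lt_compat, pow_lt; lra.
  + intros s1 s2 A B C. apply (incr_MVT (fun s => Ulow eps l gamma s t) (fun u => 3 * acoef eps l gamma t * (tau eps l t ^ 3) ^ 2 / (sqrt u + tau eps l t ^ 3) ^ 4)); auto.
    intros u _. apply dfpos; auto.
  + apply (concave_MVT _ (fun u => 3 * acoef eps l gamma t * (tau eps l t ^ 3) ^ 2 / (sqrt u + tau eps l t ^ 3) ^ 4)); auto.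
    intros u v A B C. apply dfdec; auto.
- intros t Ht. unfold Ulow, s32, s12. rewrite sqrt_0. simpl. unfold Rdiv. ring.
- intros s Hs.
  assert (0 < sqrt s) by (apply sqrt_lt_R0; lra).
  replace (2 ^ 5) with (Ulow eps l gamma s (eps / l)).
  + eapply filterlim_filter_le_1; [apply filter_le_within|].
    apply (ex_derive_continuous (fun t => Ulow eps l gamma s t)). unfold Ulow, acoef, tau, s32, s12. auto_derive.
    replace (eps + - (l * (eps / l))) with 0 by (field; lra).
    repeat split. simpl. repeat apply Rmult_integral_contrapositive_currified; lra.
  + unfold Ulow, acoef, tau, s32, s12.
    replace (eps - l * (eps / l)) with 0 by (field; lra).
    rewrite Rmult_0_r, exp_0. field. simpl. lra.
- set (B := 2 ^ 5 * exp ((gamma + 1) * eps) * (1 + 3 * eps ^ 3)).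
  assert (HB : B < m / (2 * PI ^ 2)).
  { assert (0 < PI ^ 2) by (apply pow_lt; apply PI_RGT_0). pose proof PI_RGT_0.
    unfold B. replace (m / (2 * PI ^ 2)) with (2 ^ 5 * (m / (64 * PI ^ 2))) by (field; lra).
    replace (2 ^ 5) with 32 by ring. lra. }
  assert (Hub : forall x, (exists t, 0 < t < eps / l /\ x = Ulow eps l gamma 1 t) -> x <= B).
  { intros x [t [Ht ->]].
    destruct (tau_pos eps l t Hl ltac:(lra)) as [Htau Htau2].
    unfold Ulow, acoef, s32, s12, B. rewrite sqrt_1.
    set (tt := tau eps l t) in *.
    assert (0 < tt ^ 3) by (apply pow_lt; unfold tt, tau in *; lra).
    assert (tt ^ 3 <= eps ^ 3) by (apply pow_incr; unfold tt, tau in *; lra).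
    assert (exp ((gamma + 1) * tt) <= exp ((gamma + 1) * eps)).
    { assert (Hle : (gamma + 1) * tt <= (gamma + 1) * eps) by (apply Rmult_le_compat_l; unfold tt, tau in *; lra).
      destruct Hle as [Hlt|Heq]. left; apply exp_increasing; auto. rewrite Heq; lra. }
    assert (0 < exp ((gamma + 1) * tt)) by apply exp_pos.
    assert (1 <= (1 + tt ^ 3) ^ 3).
    { replace 1 with (1 ^ 3) at 1 by ring. apply pow_incr. lra. }
    assert (Hq : 0 < (1 + tt ^ 3) ^ 3) by lra.
    apply (Rmult_le_reg_r ((1 + tt ^ 3) ^ 3)); auto.
    unfold Rdiv. rewrite Rmult_assoc, Rinv_l by lra.
    replace (1 ^ 3 + 3 * tt ^ 3 * 1) with (1 + 3 * tt ^ 3) by ring.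
    assert (0 <= 2 ^ 5 * exp ((gamma + 1) * tt) * (1 + 3 * tt ^ 3) <= 2 ^ 5 * exp ((gamma + 1) * eps) * (1 + 3 * eps ^ 3)).
    { split. apply Rmult_le_pos; nra. apply Rmult_le_compat; nra. }
    assert (0 <= 2 ^ 5 * exp ((gamma + 1) * eps) * (1 + 3 * eps ^ 3)) by lra.
    nra. }
  destruct (Lub_Rbar_correct (fun x => exists t, 0 < t < eps / l /\ x = Ulow eps l gamma 1 t)) as [_ Hl2].
  specialize (Hl2 (Finite B)).
  assert (Hle : Rbar_le (Lub_Rbar (fun x => exists t, 0 < t < eps / l /\ x = Ulow eps l gamma 1 t)) (Finite B)).
  { apply Hl2. intros x Hx. simpl. apply Hub; auto. }
  destruct (Lub_Rbar _); simpl in *; auto; lra.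
- intros s t Hs Ht. apply Pneg; auto; lra.
Qed.
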